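(* Let $k$ be a positive integer such that $k+1$ is an odd prime. For every $\mathbf v\in N_k$ there exist $s\in\mathbb{Z}_{k+1}$ and $r\in\mathbb{Z}$ such that, working modulo $k+1$, every coordinate of $s\mathbf v+\mathbf r_k\!\left(\tfrac{r}{k+1}\right)$ lies in $\{1,\ldots,k-1\}$.
   Context: $\mathbb{Z}_{k+1}$ is the integers modulo $k+1$. $N_k:=\{\mathbf v\in\mathbb{Z}_{k+1}^k:\ \mathbf v\neq\mathbf 0 \text{ and } \mathbf v \text{ has at least one zero coordinate}\}$. For $x\in\mathbb{R}$, $\{x\}=x-\lfloor x\rfloor$ is the fractional part, and for $t\in\mathbb{R}$, $\mathbf r_k(t):=\big(\lfloor (k+1)\{t\}\rfloor,\lfloor (k+1)\{2t\}\rfloor,\ldots,\lfloor (k+1)\{kt\}\rfloor\big)\in\{0,\ldots,k\}^k$, reduced modulo $k+1$ when added to elements of $\mathbb{Z}_{k+1}^k$. *)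

(* Defs.v *)
From HB Require Import structures.
From mathcomp Require Import all_boot all_order all_algebra.
Set Implicit Arguments. Unset Strict Implicit. Unset Printing Implicit Defensive.
Import Order.TTheory GRing.Theory Num.Theory.
Local Open Scope ring_scope.

Definition fracq (x : rat) : rat := x - (Num.floor x)%:~R.

(* r_k(t) = (floor((k+1){t}), ..., floor((k+1){k t})), coordinate j : 'I_k
   corresponds to multiplier j+1; values are integers in {0..k}. *)
Definition rk (k : nat) (t : rat) (j : 'I_k) : int :=
  Num.floor ((k.+1)%:R * fracq ((j.+1)%:R * t)).

Definition rk_vec (k : nat) (t : rat) : 'rV['Z_k.+1]_k :=
  \row_(j < k) ((@rk k t j)%:~R : 'Z_k.+1).

Definition in_Nk (k : nat) (v : 'rV['Z_k.+1]_k) : Prop :=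
  v != 0 /\ exists j : 'I_k, v ord0 j = 0.

(* Main.v *)
Require Import Defs.
From HB Require Import structures.
From mathcomp Require Import all_boot all_order all_algebra.
Import Order.TTheory GRing.Theory Num.Theory.
Local Open Scope ring_scope.
From mathcomp Require Import all_field.
From mathcomp Require Import zify ring lra.


Lemma rk_nat k (rn : nat) (j : 'I_k) :
  @rk k ((Posz rn)%:~R / (k.+1)%:R) j = Posz ((j.+1 * rn) %% k.+1).
Proof.
rewrite /rk /Defs.fracq.
set x := (j.+1)%:R * _.
set N := (j.+1 * rn)%N.
have p0 : (k.+1)%:R != 0 :> rat by rewrite pnatr_eq0.
have E : x = ((N %/ k.+1)%N%:R + (N %% k.+1)%N%:R / (k.+1)%:R : rat).
  rewrite /x -pmulrn mulrA -natrM -/N {1}(divn_eq N k.+1) natrD natrM mulrDl.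
  by rewrite -mulrA divff // mulr1.
have F0 : Num.floor ((N %% k.+1)%N%:R / (k.+1)%:R : rat) = 0.
  apply: floor_def; rewrite add0r /= mulr0z mulr1z; apply/andP; split.
    by rewrite divr_ge0 // ler0n.
  rewrite ltr_pdivrMr ?ltr0n // mul1r ltr_nat ltn_mod //.
have Hq : Num.floor x = (N %/ k.+1)%N.
  rewrite E addrC floorDrz ?rpred_nat // F0 add0r.
  by rewrite -[(_ %/ _)%N%:R]/((Posz _)%:~R) ?intrKfloor // -pmulrn.
have Hf : x - (Num.floor x)%:~R = (N %% k.+1)%N%:R / (k.+1)%:R.
  by rewrite Hq E -pmulrn addrC addKr.
rewrite Hf mulrC divfK //.
by rewrite -[(_ %% _)%N%:R]/((Posz _)%:~R) ?intrKfloor // -pmulrn.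
Qed.


Section PS.
Variable p : nat.
Hypothesis hp : prime p.
Local Notation F := 'F_p.

Lemma p_gt1 : (1 < p)%N. Proof. exact: prime_gt1. Qed.

Lemma sum_const1 : \sum_(x : F) (1 : F) = 0.
Proof. by rewrite sumr_const card_Fp // pchar_Fp_0. Qed.

Lemma card_nz : #|[pred x : F | x != 0]| = p.-1.
Proof.
have := cardC1 (0 : F); rewrite card_Fp // => H.
Qed.

Lemma fermat (x : F) : x != 0 -> x ^+ p.-1 = 1.
Proof.
move=> x0; have : x ^+ p.-1.+1 = x.
  rewrite prednK; last by have := p_gt1; lia.
  by have := expf_card x; rewrite card_Fp.
rewrite exprS => /(congr1 (fun y => x^-1 * y)); rewrite mulrA mulVf // mul1r. by [].
Qed.

Lemma psum_top : \sum_(x : F) x ^+ p.-1 = -1.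
Proof.
rewrite (bigD1 0) //= expr0n.
have -> : (p.-1 == 0%N) = false by have := p_gt1; lia.
rewrite add0r (eq_bigr (fun _ => 1)); last by move=> x /fermat.
rewrite sumr_const.
have : (#|[pred i : F | i != 0]|%:R : F) + 1 = 0.
  by rewrite card_nz natr1 prednK ?pchar_Fp_0 //; have := p_gt1; lia.
move/eqP; rewrite addr_eq0 => /eqP <-.
done.
Qed.

Lemma psum_mid i : (0 < i)%N -> (i < p.-1)%N -> \sum_(x : F) x ^+ i = 0.
Proof.
move=> i0 ip.
have [a a0 ai] : exists2 a : F, a != 0 & a ^+ i != 1.
  case: (boolP [exists (x : F | x != 0), x ^+ i != 1]) => [/exists_inP //|/exists_inPn H].
  exfalso.
  have : (size (enum [pred x : F | x != 0%R]) < size ('X^i - 1 : {poly F})%R)%N.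
    apply: max_poly_roots.
    - by rewrite -size_poly_eq0 -[1]/(1%:P) size_XnsubC.
    - apply/allP => x; rewrite mem_enum => /H.
      by rewrite negbK /root !hornerE subr_eq0.
    - exact: enum_uniq.
  rewrite -[1]/(1%:P) size_XnsubC // -cardE card_nz. lia.
set S := \sum_(x : F) x ^+ i.
have E : S = a ^+ i * S.
  rewrite {1}/S (reindex_inj (mulfI a0)) /= /S mulr_sumr.
  by apply: eq_bigr => x _; rewrite exprMn.
have : (a ^+ i - 1) * S = 0 by rewrite mulrBl -E mul1r subrr.
by move/eqP; rewrite mulf_eq0 subr_eq0 (negbTE ai) /= => /eqP.
Qed.


Lemma sum_horner (f : {poly F}) : (size f <= p)%N -> \sum_(x : F) f.[x] = - f`_p.-1.
Proof.
move=> sf.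
under eq_bigr => x _ do rewrite (horner_coef_wide x sf).
rewrite exchange_big /=.
have pp : (p.-1 < p)%N by have := p_gt1; lia.
rewrite (bigD1 (Ordinal pp)) //= -mulr_sumr psum_top mulrN1.
rewrite big1 ?addr0 // => j ne.
rewrite -mulr_sumr.
have jn : (j : nat) != p.-1 by apply: contra ne => /eqP e; apply/eqP/val_inj.
have jp := ltn_ord j.
case: (posnP j) => [->|j0].
  by rewrite (eq_bigr (fun _ => 1)) ?sum_const1 ?mulr0 // => x _; rewrite expr0.
by rewrite psum_mid ?mulr0 //; lia.
Qed.

End PS.



Section C.
Variable k : nat.
Hypothesis hp : prime k.+1.
Local Notation F := 'F_(k.+1).

Lemma prod_nz (g : 'I_k -> F) : (forall j, g j != 0) ->
  (forall x : F, x != 0 -> exists j, g j = x) ->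
  \prod_(j < k) g j = \prod_(x in [set x : F | x != 0]) x.
Proof.
move=> gnz gs.
set NZ := [set x : F | x != 0].
have cNZ : #|NZ| = k by rewrite cardsE (@card_nz _ hp).
have sub : NZ \subset [set g j | j in 'I_k].
  apply/subsetP => x; rewrite inE => /gs [j <-]; exact: imset_f.
have cI : #|[set g j | j in 'I_k]| = k.
  apply/eqP; rewrite eqn_leq (leq_trans (leq_imset_card _ _)) ?card_ord //.
  by have := subset_leq_card sub; rewrite cNZ.
have inj : {in 'I_k &, injective g}.
  by apply/imset_injP; rewrite cI card_ord.
have EQ : [set g j | j in 'I_k] = NZ.
  apply/eqP; rewrite eqEcard cI cNZ leqnn andbT.
  apply/subsetP => x /imsetP [j _ ->]; by rewrite inE.
by rewrite -EQ big_imset.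
Qed.

Lemma core (hodd : odd k.+1) (a : 'I_k -> F) (hz : exists j, a j = 0)
  (hnz : exists j, a j != 0) :
  exists s r : F, forall j : 'I_k,
    (s * a j + r * (j.+1)%:R != 0) && (s * a j + r * (j.+1)%:R != -1).
Proof.
set mu := fun j : 'I_k => ((j.+1)%:R : F).
have valmu j : (mu j : nat) = j.+1.
  by rewrite /mu val_Fp_nat // modn_small // ltnS.
have mu0 j : mu j != 0.
  by apply/negP => /eqP E; have := valmu j; rewrite E.
have musurj : forall x : F, x != 0 -> exists j, mu j = x.
  move=> x x0.
  have xl : (x < k.+1)%N by apply: leq_trans (ltn_ord x) _; rewrite Fp_cast.
  have xp : (0 < x)%N by rewrite lt0n; apply: contra x0 => /eqP e; apply/eqP/val_inj.
  have jl : (x - 1 < k)%N by lia.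
  exists (Ordinal jl); apply/val_inj; rewrite /= valmu /=; lia.
case: (boolP [exists s : F, [exists r : F, [forall j : 'I_k,
   (s * a j + r * mu j != 0) && (s * a j + r * mu j != -1)]]]).
  by move/existsP => [s /existsP [r /forallP H]]; exists s, r.
move=> Hn; exfalso.
have Hb : forall s r : F, exists j,
    ~~ ((s * a j + r * mu j != 0) && (s * a j + r * mu j != -1)).
  move=> s r; move/existsPn: Hn => /(_ s) /existsPn /(_ r) /forallPn [j Hj].
  by exists j.
set w := fun j => a j / mu j.
set W := [set w j | j in 'I_k].
have S1 : forall z, z \notin W -> \prod_(j < k) (a j - mu j * z) = \prod_(j < k) mu j.
  move=> z zW.
  have hh j : a j - mu j * z != 0.
    apply: contra zW; rewrite subr_eq0 => /eqP E; apply/imsetP; exists j => //.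
    by rewrite /w E [mu j * z]mulrC mulfK.
  rewrite (prod_nz _ hh) ?(prod_nz _ mu0 musurj) //.
  move=> x x0.
  have t0 : - x^-1 != 0 by rewrite oppr_eq0 invr_eq0.
  have [j Hj] := Hb (- x^-1) (- (- x^-1 * z)).
  exists j.
  have E : - x^-1 * a j + - (- x^-1 * z) * mu j = - x^-1 * (a j - mu j * z) by ring.
  move: Hj; rewrite E mulf_eq0 (negbTE t0) (negbTE (hh j)) /= negbK.
  rewrite mulNr eqr_opp => /eqP H.
  by rewrite -[LHS]mul1r -(mulfV x0) -mulrA H mulr1.
have dle : (#|W| <= k)%N by rewrite (leq_trans (leq_imset_card _ _)) ?card_ord.
have dge : (1 < #|W|)%N.
  case: hz => j0 a0; case: hnz => j1 a1.
  apply/card_gt1P; exists (w j0), (w j1); split; try by apply: imset_f.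
  by rewrite /w a0 mul0r eq_sym mulf_neq0 // invr_neq0.
set P := \prod_(j < k) mu j.
have P0 : P != 0 by apply/prodf_neq0 => j _.
set Q := \prod_(j < k) ((- mu j) *: ('X - (w j)%:P)).
have QE z : Q.[z] = \prod_(j < k) (a j - mu j * z).
  rewrite horner_prod; apply: eq_bigr => j _; rewrite hornerZ !hornerE /w.
  move: (mu0 j); move: (mu j) (a j) => m b m0. by field.
have sQ : size Q = k.+1.
  rewrite size_prod; last first.
    by move=> j _; rewrite scale_poly_eq0 negb_or oppr_eq0 mu0 polyXsubC_eq0.
  rewrite (eq_bigr (fun _ => 2%N)); last first.
    by move=> j _; rewrite size_scale ?oppr_eq0 ?size_XsubC.
  rewrite sum_nat_const card_ord. lia.
have lQ : Q`_k = P.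
  have := lead_coefE Q; rewrite sQ /= => <-.
  rewrite lead_coef_prod.
  under eq_bigr => j _ do rewrite lead_coefZ lead_coefXsubC mulr1.
  rewrite prodrN card_ord -signr_odd.
  by move: hodd => /= /negbTE ->; rewrite expr0 mul1r.
have sumQ : \sum_(z : F) Q.[z] = P *+ #|[predC W]|.
  rewrite -sumr_const [RHS]big_mkcond /=; apply: eq_bigr => z _.
  rewrite inE QE; case: ifP => zW; first exact: S1.
  move/negbFE: zW => /imsetP [j _ ->].
  rewrite (bigD1 j) //= /w [mu j * _]mulrC divfK // subrr mul0r //.
have := @sum_horner _ hp Q (eq_leq sQ); rewrite /= lQ sumQ => /eqP.
rewrite -addr_eq0 -mulrSr -mulr_natr mulf_eq0 (negbTE P0) /= => /eqP E.
have := congr1 (@nat_of_ord _) E; rewrite val_Fp_nat //=.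
have cW : (#|W| + #|[predC W]|)%N = k.+1 by rewrite cardC card_Fp.
move: dle dge cW; set c := #|[predC W]|; set d := #|W|. move=> dl dg cw H. move: H; rewrite modn_small; lia.
Qed.
End C.

Theorem lemma4p2 (k : nat) (hk : (0 < k)%N) (hp : prime k.+1) (hodd : odd k.+1)
  (v : 'rV['Z_k.+1]_k) (hv : in_Nk v) :
  exists (s : 'Z_k.+1) (r : int),
    forall j : 'I_k,
      let c := (s *: v + rk_vec k (r%:~R / (k.+1)%:R)) ord0 j in
      (1 <= (c : nat))%N && ((c : nat) <= k.-1)%N.
Proof.
case: hv => vnz [j0 vj0].
have p1 : (1 < k.+1)%N by lia.
set a := fun j : 'I_k => (((v ord0 j) : nat)%:R : 'F_(k.+1)).
have Fv n : ((n%:R : 'F_(k.+1)) == 0) = (n %% k.+1 == 0)%N.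
  by rewrite -val_eqE /= val_Fp_nat.
have hz : exists j, a j = 0 by exists j0; rewrite /a vj0.
have hnz : exists j, a j != 0.
  case: (pickP (fun j : 'I_k => v ord0 j != 0)) => [j Hj|H].
    exists j; rewrite /a Fv modn_small.
      by apply: contra Hj => /eqP E; apply/eqP/val_inj; rewrite /= E.
    by apply: leq_trans (ltn_ord _) _; rewrite Zp_cast.
  exfalso; apply: (negP vnz); apply/eqP/rowP => j; rewrite mxE.
  by move: (H j) => /= /negbFE /eqP.
have [s' [r' Hsr]] := @core _ hp hodd _ hz hnz.
exists ((s' : nat)%:R), (Posz (r' : nat)).
move=> j /=. rewrite !mxE rk_nat -pmulrn.
have Ec : ((s' : nat)%:R * v ord0 j + ((j.+1 * r') %% k.+1)%:R : 'Z_k.+1) =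
   ((s' * v ord0 j + j.+1 * r')%N)%:R.
  by rewrite Zp_nat_mod // natrD !natrM natr_Zp.
rewrite Ec val_Zp_nat //.
have HF := Hsr j.
rewrite -(natr_Zp s') -(natr_Zp r') /a -!natrM -natrD in HF.
rewrite -addr_eq0 natr1 !Fv [(r' * _)%N]mulnC in HF.
move: HF; set N := (s' * _ + _)%N.
have := ltn_pmod N (ltn0Sn k).
move=> Hlt /andP [/negP H1 /negP H2].
have H3 : (N %% k.+1 != k)%N.
  apply/negP => /eqP E; apply: H2; rewrite -addn1 -modnDml E addn1 modnn //.
apply/andP; split; [rewrite lt0n; exact/negP | lia].
Qed.
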